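(* Let $X$ be an irreducible sofic shift, $Y$ an irreducible shift of finite type, and $f:X\to Y$ a factor map which is right-continuing almost-everywhere with retract $0$. Then $f$ is right-continuing with retract $0$ (everywhere): for every $x\in X$ and every $y\in Y$ with $f(x)_i=y_i$ for all $i\le0$, there exists $x'\in X$ with $x'_i=x_i$ for all $i\le0$ and $f(x')=y$.
   Context: Subshifts are closed shift-invariant subsets of $A^{\mathbb Z}$, $A$ finite, with shift $\sigma(x)_i=x_{i+1}$; a factor map is a continuous, shift-commuting, onto map. A point $y\in Y$ is left-transitive in $Y$ if $\{\sigma^i(y): i\le 0\}$ is dense in $Y$. For an integer $n\ge0$, $f:X\to Y$ is right-continuing almost-everywhere with retract $n$ if for every $x\in X$ and every left-transitive $y\in Y$ with $f(x)_i=y_i$ for all $i\le n$, there exists $x'\in X$ with $x'_i=x_i$ for all $i\le 0$ and $f(x')=y$. *)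

(* Defs.v *)
From Stdlib Require Import ZArith List FinFun.
Import ListNotations.
Open Scope Z_scope.

Definition config (A : Type) := Z -> A.

Definition agree_on {A : Type} (x y : Z -> A) (N : Z) : Prop :=
  forall i, -N <= i <= N -> x i = y i.

Definition shift {A : Type} (x : Z -> A) : Z -> A := fun i => x (i + 1).
Definition shiftn {A : Type} (n : Z) (x : Z -> A) : Z -> A := fun i => x (i + n).

Definition closed_set {A : Type} (X : (Z -> A) -> Prop) : Prop :=
  forall x, (forall N, exists x', X x' /\ agree_on x x' N) -> X x.

Definition shift_invariant {A : Type} (X : (Z -> A) -> Prop) : Prop :=
  forall x, X x <-> X (shift x).

Definition is_subshift {A : Type} (X : (Z -> A) -> Prop) : Prop :=
  closed_set X /\ shift_invariant X.

Definition occurs {A : Type} (w : list A) (x : Z -> A) (i : Z) : Prop :=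
  forall k : nat, (k < length w)%nat -> nth_error w k = Some (x (i + Z.of_nat k)).

Definition in_language {A : Type} (X : (Z -> A) -> Prop) (w : list A) : Prop :=
  exists x i, X x /\ occurs w x i.

Definition irreducible {A : Type} (X : (Z -> A) -> Prop) : Prop :=
  forall u w, in_language X u -> in_language X w ->
    exists v, in_language X (u ++ v ++ w).

Definition is_SFT {A : Type} (X : (Z -> A) -> Prop) : Prop :=
  is_subshift X /\
  exists F : list (list A),
    forall x, X x <-> (forall w i, In w F -> ~ occurs w x i).

Definition continuous_on {A B : Type} (X : (Z -> A) -> Prop) (f : (Z -> A) -> (Z -> B)) : Prop :=
  forall x, X x -> forall N, exists M, forall x', X x' -> agree_on x x' M ->
    agree_on (f x) (f x') N.

Definition factor_map {A B : Type} (X : (Z -> A) -> Prop) (Y : (Z -> B) -> Prop)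
    (f : (Z -> A) -> (Z -> B)) : Prop :=
  (forall x, X x -> Y (f x)) /\
  continuous_on X f /\
  (forall x, X x -> forall i, f (shift x) i = shift (f x) i) /\
  (forall y, Y y -> exists x, X x /\ forall i, f x i = y i).

Definition is_sofic {A : Type} (X : (Z -> A) -> Prop) : Prop :=
  is_subshift X /\
  exists (C : Type) (W : (Z -> C) -> Prop) (g : (Z -> C) -> (Z -> A)),
    Finite C /\ is_SFT W /\ factor_map W X g.

Definition left_transitive {B : Type} (Y : (Z -> B) -> Prop) (y : Z -> B) : Prop :=
  Y y /\
  forall y', Y y' -> forall N, exists i, i <= 0 /\ agree_on (shiftn i y) y' N.

Definition right_continuing_ae {A B : Type} (X : (Z -> A) -> Prop) (Y : (Z -> B) -> Prop)
    (f : (Z -> A) -> (Z -> B)) (n : nat) : Prop :=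
  forall x y, X x -> left_transitive Y y ->
    (forall i, i <= Z.of_nat n -> f x i = y i) ->
    exists x', X x' /\ (forall i, i <= 0 -> x' i = x i) /\ (forall i, f x' i = y i).

(* Main.v *)
Require Import Defs.
From Stdlib Require Import ZArith List FinFun.
From Stdlib Require Import Lia Classical ClassicalEpsilon FunctionalExtensionality.
Import ListNotations.
Open Scope Z_scope.
Local Notation shift := Defs.shift.

Lemma agree_sym {A} (x y : Z -> A) N : agree_on x y N -> agree_on y x N.
Proof. intros H i Hi; symmetry; apply H; auto. Qed.
Lemma agree_trans {A} (x y z : Z -> A) N : agree_on x y N -> agree_on y z N -> agree_on x z N.
Proof. intros H1 H2 i Hi; rewrite H1 by auto; apply H2; auto. Qed.
Lemma agree_mono {A} (x y : Z -> A) N M : M <= N -> agree_on x y N -> agree_on x y M.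
Proof. intros Hm H i Hi; apply H; lia. Qed.

Lemma shiftn_eq {A} (n m : Z) (x : Z -> A) : (forall i, i + n = i + m) -> shiftn n x = shiftn m x.
Proof. intro H. apply functional_extensionality; intro i; unfold shiftn; rewrite H; auto. Qed.

Lemma X_shiftn {A} (X : (Z->A)->Prop) : shift_invariant X -> forall x, X x -> forall n, X (shiftn n x).
Proof.
  intros HS x Hx.
  assert (E0 : shiftn 0 x = x) by (apply functional_extensionality; intro i; unfold shiftn; f_equal; lia).
  assert (H : forall m : nat, X (shiftn (Z.of_nat m) x) /\ X (shiftn (- Z.of_nat m) x)).
  { induction m as [|m [IH1 IH2]].
    - simpl. rewrite E0. auto.
    - split.
      + replace (shiftn (Z.of_nat (S m)) x) with (shift (shiftn (Z.of_nat m) x)).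
        * apply (proj1 (HS _)). auto.
        * apply functional_extensionality; intro i; unfold shiftn, shift; f_equal; lia.
      + apply (proj2 (HS _)). replace (shift (shiftn (- Z.of_nat (S m)) x)) with (shiftn (- Z.of_nat m) x). auto.
        apply functional_extensionality; intro i; unfold shiftn, shift; f_equal; lia. }
  intro n. destruct (Z_le_gt_dec 0 n).
  - replace n with (Z.of_nat (Z.to_nat n)) by lia. apply H.
  - replace n with (- Z.of_nat (Z.to_nat (-n))) by lia. apply H.
Qed.

Lemma f_shiftn {A B} (X : (Z->A)->Prop) (f : (Z->A)->(Z->B)) :
  shift_invariant X -> (forall x, X x -> forall i, f (shift x) i = shift (f x) i) ->
  forall x, X x -> forall n i, f (shiftn n x) i = f x (i + n).
Proof.
  intros HS Hf x Hx.
  assert (E0 : shiftn 0 x = x) by (apply functional_extensionality; intro i; unfold shiftn; f_equal; lia).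
  assert (H : forall m : nat, (forall i, f (shiftn (Z.of_nat m) x) i = f x (i + Z.of_nat m)) /\
                              (forall i, f (shiftn (- Z.of_nat m) x) i = f x (i - Z.of_nat m))).
  { induction m as [|m [IH1 IH2]].
    - simpl. rewrite E0. split; intro i; f_equal; lia.
    - split; intro i.
      + replace (shiftn (Z.of_nat (S m)) x) with (shift (shiftn (Z.of_nat m) x)).
        * rewrite Hf by (apply X_shiftn; auto). unfold shift. rewrite IH1. f_equal; lia.
        * apply functional_extensionality; intro j; unfold shiftn, shift; f_equal; lia.
      + set (u := shiftn (- Z.of_nat (S m)) x).
        assert (Hu : X u) by (apply X_shiftn; auto).
        assert (Esu : shift u = shiftn (- Z.of_nat m) x)
          by (apply functional_extensionality; intro j; unfold u, shiftn, shift; f_equal; lia).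
        pose proof (Hf u Hu (i - 1)) as E. rewrite Esu, IH2 in E. unfold shift in E.
        replace (i - 1 + 1) with i in E by lia. rewrite <- E. f_equal; lia. }
  intros n i. destruct (Z_le_gt_dec 0 n).
  - replace n with (Z.of_nat (Z.to_nat n)) by lia. apply H.
  - replace n with (- Z.of_nat (Z.to_nat (-n))) by lia. rewrite (proj2 (H _)). f_equal; lia.
Qed.

Definition infs (S : nat -> Prop) := forall k0, exists k, (k0 <= k)%nat /\ S k.

Lemma pigeon {A} (z : nat -> Z -> A) (c : Z) : forall (l : list A) (S : nat -> Prop),
  infs S -> (forall k, S k -> In (z k c) l) -> exists a, infs (fun k => S k /\ z k c = a).
Proof.
  induction l as [|a l IH]; intros S HS Hin.
  - destruct (HS 0%nat) as [k [_ Hk]]. destruct (Hin k Hk).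
  - destruct (classic (infs (fun k => S k /\ z k c = a))) as [H|H]; [eauto|].
    destruct (IH (fun k => S k /\ z k c <> a)) as [a' Ha'].
    + intro k0. apply NNPP. intro Hn. apply H. intro k1.
      apply NNPP; intro Hn1.
      destruct (HS (Nat.max k0 k1)) as [k [Hk Sk]].
      destruct (classic (z k c = a)) as [E|E].
      * apply Hn1. exists k. split; [lia|auto].
      * apply Hn. exists k. split; [lia|auto].
    + intros k [Sk Nk]. destruct (Hin k Sk) as [E|E]; [congruence|auto].
    + exists a'. intro k0. destruct (Ha' k0) as [k [Hk [[Sk _] E]]]. exists k; auto.
Qed.

Definition refn {A} (inh : inhabited A) (z : nat -> Z -> A) (S : nat -> Prop) (c : Z) : nat -> Prop :=
  fun k => S k /\ z k c = epsilon inh (fun a => infs (fun k => S k /\ z k c = a)).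

Fixpoint st {A} (inh : inhabited A) z (j : nat) : nat -> Prop :=
  match j with
  | O => fun _ => True
  | S j => refn inh z (refn inh z (st inh z j) (Z.of_nat j)) (- Z.of_nat j)
  end.

Lemma refn_inf {A} (l : list A) (Hl : forall a, In a l) (inh : inhabited A) (z : nat -> Z -> A) S c :
  infs S -> infs (refn inh z S c).
Proof.
  intro H. unfold refn.
  apply (epsilon_spec inh (fun a => infs (fun k => S k /\ z k c = a))).
  apply pigeon with l; auto.
Qed.

Lemma compact {A} (HA : Finite A) (z : nat -> Z -> A) :
  exists x', forall N k0, exists k, (k0 <= k)%nat /\ agree_on x' (z k) N.
Proof.
  destruct HA as [l Hl].
  pose (inh := inhabits (z 0%nat 0)).
  assert (Hinf : forall j, infs (st inh z j)).
  { induction j; simpl. - intro k0; exists k0; auto. - do 2 apply (refn_inf l Hl); auto. }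
  assert (Hmono : forall j j', (j <= j')%nat -> forall k, st inh z j' k -> st inh z j k).
  { intros j j' Hjj. induction Hjj; auto. intros k Hk. apply IHHjj.
    simpl in Hk. unfold refn in Hk. tauto. }
  pose (lim := fun i => epsilon inh (fun a => forall k, st inh z (S (Z.to_nat (Z.abs i))) k -> z k i = a)).
  assert (Hlim : forall i k, st inh z (S (Z.to_nat (Z.abs i))) k -> z k i = lim i).
  { intro i. unfold lim. apply epsilon_spec.
    simpl. unfold refn.
    destruct (Z_le_gt_dec 0 i).
    - assert (Ei : i = Z.of_nat (Z.to_nat (Z.abs i))) by lia.
      eexists. intros k [[_ E] _]. rewrite Ei at 1. exact E.
    - assert (Ei : i = - Z.of_nat (Z.to_nat (Z.abs i))) by lia.
      eexists. intros k [_ E]. rewrite Ei at 1. exact E. }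
  exists lim. intros N k0.
  destruct (Hinf (S (Z.to_nat N)) k0) as [k [Hk Sk]].
  exists k. split; auto. intros i Hi. symmetry. apply Hlim.
  apply Hmono with (S (Z.to_nat N)); auto. lia.
Qed.

Definition upd {A} (p : Z -> A) (q : Z) (a : A) : Z -> A := fun i => if Z.eq_dec i q then a else p i.

Lemma pats {A} (l : list A) (Hl : forall a, In a l) (d : Z -> A) : forall ps : list Z,
  exists P : list (Z -> A), forall z, exists p, In p P /\ forall q, In q ps -> p q = z q.
Proof.
  induction ps as [|q ps IH].
  - exists [d]. intro z. exists d. split; [left; auto| intros q []].
  - destruct IH as [P HP]. exists (flat_map (fun p => map (fun a => upd p q a) l) P).
    intro z. destruct (HP z) as [p [Hp Hq]]. exists (upd p q (z q)). split.
    + apply in_flat_map. exists p. split; auto. apply in_map. auto.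
    + intros q' Hq'. unfold upd. destruct (Z.eq_dec q' q).
      * subst; auto.
      * destruct Hq' as [E|H]; [congruence|auto].
Qed.

Definition win (k : Z) : list Z := map (fun j => Z.of_nat j - k) (seq 0 (Z.to_nat (2*k+1))).
Lemma in_win k i : -k <= i <= k -> In i (win k).
Proof. intro H. unfold win. apply in_map_iff. exists (Z.to_nat (i + k)). split. lia. apply in_seq. lia. Qed.

Lemma targets_aux {A} (X : (Z->A)->Prop) (k : Z) : forall P : list (Z -> A),
  exists T, (forall t, In t T -> X t) /\ forall p, In p P -> (exists z, X z /\ agree_on p z k) -> exists t, In t T /\ agree_on p t k.
Proof.
  induction P as [|p P IH].
  - exists []. split; [intros t []| intros p []].
  - destruct IH as [T [HT1 HT2]].
    destruct (classic (exists z, X z /\ agree_on p z k)) as [[z [Hz Ha]]|Hn].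
    + exists (z :: T). split.
      * intros t [E|Ht]; [subst; auto| auto].
      * intros p' [E|Hp'] Hex.
        -- subst. exists z. split; [left; auto| auto].
        -- destruct (HT2 p' Hp' Hex) as [t [? ?]]. exists t. split; [right|]; auto.
    + exists T. split; auto. intros p' [E|Hp'] Hex; [subst; contradiction| auto].
Qed.

Lemma targets {A} (HA : Finite A) (X : (Z->A)->Prop) (d : Z -> A) (k : Z) :
  exists T, (forall t, In t T -> X t) /\ forall z, X z -> exists t, In t T /\ agree_on z t k.
Proof.
  destruct HA as [l Hl].
  destruct (pats l Hl d (win k)) as [P HP].
  destruct (targets_aux X k P) as [T [HT1 HT2]].
  exists T. split; auto. intros z Hz.
  destruct (HP z) as [p [Hp Hq]].
  assert (Hpz : agree_on p z k) by (intros i Hi; apply Hq, in_win; auto).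
  destruct (HT2 p Hp (ex_intro _ z (conj Hz Hpz))) as [t [Ht Hpt]].
  exists t. split; auto. apply agree_trans with p; auto. apply agree_sym; auto.
Qed.

Definition wd {A} (z : Z -> A) (a : Z) (n : nat) : list A := map (fun j => z (a + Z.of_nat j)) (seq 0 n).
Lemma wd_len {A} (z : Z -> A) a n : length (wd z a n) = n.
Proof. unfold wd. rewrite length_map, length_seq. auto. Qed.
Lemma wd_nth {A} (z : Z -> A) a n j : (j < n)%nat -> nth_error (wd z a n) j = Some (z (a + Z.of_nat j)).
Proof. intro H. unfold wd. rewrite nth_error_map, nth_error_seq.
  destruct (Nat.ltb_spec j n); [reflexivity| lia]. Qed.
Lemma wd_lang {A} (X : (Z->A)->Prop) z a n : X z -> in_language X (wd z a n).
Proof. intro H. exists z, a. split; auto. intros k Hk. rewrite wd_len in Hk. apply wd_nth; auto. Qed.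

Lemma occ_app_r {A} (u v s : list A) z i0 j : occurs (u ++ v ++ s) z i0 -> (j < length s)%nat ->
  nth_error s j = Some (z (i0 + Z.of_nat (length u + length v + j))).
Proof.
  intros H Hj. rewrite <- (H (length u + length v + j)%nat).
  - rewrite app_assoc, nth_error_app2; rewrite length_app; [f_equal; lia | lia].
  - rewrite !length_app; lia.
Qed.
Lemma occ_app_l {A} (u v s : list A) z i0 j : occurs (u ++ v ++ s) z i0 -> (j < length u)%nat ->
  nth_error u j = Some (z (i0 + Z.of_nat j)).
Proof.
  intros H Hj. rewrite <- (H j).
  - rewrite nth_error_app1; auto.
  - rewrite !length_app; lia.
Qed.

Lemma glue {A} (X : (Z->A)->Prop) : shift_invariant X -> irreducible X ->
  forall w t R k, X w -> X t -> 0 <= R -> 0 <= k ->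
  exists w' s, X w' /\ agree_on w w' R /\ s <= -(R+k+1) /\ agree_on (shiftn s w') t k.
Proof.
  intros HS HI w t R k Hw Ht HR Hk.
  set (u := wd t (-k) (Z.to_nat (2*k+1))).
  set (sw := wd w (-R) (Z.to_nat (2*R+1))).
  destruct (HI u sw (wd_lang X t _ _ Ht) (wd_lang X w _ _ Hw)) as [v [z [i0 [Hz Hocc]]]].
  assert (Hu : length u = Z.to_nat (2*k+1)) by apply wd_len.
  assert (Hsw : length sw = Z.to_nat (2*R+1)) by apply wd_len.
  set (L := Z.of_nat (length u + length v)).
  exists (shiftn (i0 + L + R) z), (k - L - R).
  split; [apply X_shiftn; auto|]. split; [|split].
  - intros j Hj. unfold shiftn.
    assert (Hj' : (Z.to_nat (j + R) < length sw)%nat) by lia.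
    pose proof (occ_app_r u v sw z i0 _ Hocc Hj') as E1.
    unfold sw in E1 at 1. rewrite wd_nth in E1 by lia. injection E1; intro E.
    replace (-R + Z.of_nat (Z.to_nat (j + R))) with j in E by lia. rewrite E.
    f_equal. unfold L. lia.
  - unfold L; lia.
  - intros j Hj. unfold shiftn.
    assert (Hj' : (Z.to_nat (j + k) < length u)%nat) by lia.
    pose proof (occ_app_l u v sw z i0 _ Hocc Hj') as E1.
    unfold u in E1 at 1. rewrite wd_nth in E1 by lia. injection E1; intro E.
    replace (-k + Z.of_nat (Z.to_nat (j + k))) with j in E by lia. rewrite E.
    f_equal. lia.
Qed.

Lemma mglue {A} (X : (Z->A)->Prop) : shift_invariant X -> irreducible X -> forall k, 0 <= k ->
  forall T, (forall t, In t T -> X t) ->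
  forall w R, X w -> 0 <= R -> exists w' R', X w' /\ R <= R' /\ agree_on w w' R /\
   forall t, In t T -> exists s, s <= -k /\ -R' <= s - k /\ agree_on (shiftn s w') t k.
Proof.
  intros HS HI k Hk. induction T as [|t T IH]; intros HT w R Hw HR.
  - exists w, R. repeat split; auto; try lia. intros t [].
  - destruct (IH (fun t' H => HT t' (or_intror H)) w R Hw HR) as [w1 [R1 [Hw1 [HR1 [Ha1 Hp1]]]]].
    destruct (glue X HS HI w1 t R1 k Hw1 (HT t (or_introl eq_refl)) ltac:(lia) Hk)
      as [w2 [s [Hw2 [Ha2 [Hs Hts]]]]].
    exists w2, (-s + k). split; [auto|]. split; [lia|]. split.
    + apply agree_trans with w1; auto. apply agree_mono with R1; auto.
    + intros t' [E|Ht'].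
      * subst t'. exists s. repeat split; auto; lia.
      * destruct (Hp1 t' Ht') as [s' [Hs1 [Hs2 Ha]]]. exists s'. split; [lia|]. split; [lia|].
        intros j Hj. rewrite <- (Ha j Hj). unfold shiftn. symmetry. apply Ha2. lia.
Qed.

Lemma trans_point {A} (HA : Finite A) (X : (Z->A)->Prop) : shift_invariant X -> closed_set X -> irreducible X ->
  forall x R0, X x -> 0 <= R0 -> exists xt, X xt /\ agree_on x xt R0 /\
   forall z, X z -> forall M, 0 <= M -> exists s, s <= -M /\ agree_on (shiftn s xt) z M.
Proof.
  intros HS HC HI x R0 Hx HR0.
  set (Tn := fun n : nat => epsilon (inhabits ([] : list (Z->A)))
     (fun T => (forall t, In t T -> X t) /\ forall z, X z -> exists t, In t T /\ agree_on z t (Z.of_nat n))).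
  assert (HTn : forall n, (forall t, In t (Tn n) -> X t) /\
                  forall z, X z -> exists t, In t (Tn n) /\ agree_on z t (Z.of_nat n)).
  { intro n. unfold Tn. apply epsilon_spec. apply targets; auto. }
  clearbody Tn.
  set (stepP := fun (p : (Z->A)*Z) (n : nat) (q : (Z->A)*Z) => (X (fst p) -> 0 <= snd p ->
     X (fst q) /\ snd p <= snd q /\ agree_on (fst p) (fst q) (snd p) /\
     forall t, In t (Tn n) -> exists s, s <= - Z.of_nat n /\ - snd q <= s - Z.of_nat n /\
        agree_on (shiftn s (fst q)) t (Z.of_nat n))).
  set (step := fun p n => epsilon (inhabits (x, R0)) (stepP p n)).
  assert (Hstep : forall p n, stepP p n (step p n)).
  { intros p n. unfold step. apply epsilon_spec.
    destruct (classic (X (fst p) /\ 0 <= snd p)) as [[H1 H2]|Hn].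
    - destruct (mglue X HS HI (Z.of_nat n) ltac:(lia) (Tn n) (proj1 (HTn n)) (fst p) (snd p) H1 H2)
        as [w' [R' H]].
      exists (w', R'). intros _ _. simpl. exact H.
    - exists p. intros H1 H2. exfalso; auto. }
  clearbody step. unfold stepP in Hstep. clear stepP.
  set (sq := fun n => nat_rect (fun _ => ((Z->A)*Z)%type) (x, R0) (fun n p => step p n) n).
  assert (Sq0 : sq 0%nat = (x, R0)) by reflexivity.
  assert (SqS : forall n, sq (S n) = step (sq n) n) by reflexivity.
  clearbody sq.
  assert (Inv : forall n, X (fst (sq n)) /\ 0 <= snd (sq n)).
  { induction n as [|n [I1 I2]]. - rewrite Sq0; simpl; auto.
    - rewrite SqS. destruct (Hstep (sq n) n I1 I2) as [H1 [H2 _]]. split; auto; lia. }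
  assert (Mono : forall n m, (n <= m)%nat -> snd (sq n) <= snd (sq m) /\
                 agree_on (fst (sq n)) (fst (sq m)) (snd (sq n))).
  { intros n m Hnm. induction Hnm.
    - split; [lia| intros i _; auto].
    - destruct IHHnm as [J1 J2]. destruct (Inv m) as [I1 I2].
      rewrite SqS. destruct (Hstep (sq m) m I1 I2) as [_ [H2 [H3 _]]].
      split; [lia|]. apply agree_trans with (fst (sq m)); auto. apply agree_mono with (snd (sq m)); auto. }
  assert (Place : forall n t, In t (Tn n) -> exists s, s <= - Z.of_nat n /\
          - snd (sq (S n)) <= s - Z.of_nat n /\ agree_on (shiftn s (fst (sq (S n)))) t (Z.of_nat n)).
  { intros n t Ht. destruct (Inv n) as [I1 I2]. rewrite SqS.
    destruct (Hstep (sq n) n I1 I2) as [_ [_ [_ H]]]. auto. }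
  destruct (compact HA (fun n => fst (sq n))) as [xt Hxt].
  exists xt. split; [|split].
  - apply HC. intro N. destruct (Hxt N 0%nat) as [k [_ Hk]]. exists (fst (sq k)).
    split; [apply Inv| auto].
  - destruct (Hxt R0 0%nat) as [k [Hk Ha]].
    destruct (Mono 0%nat k Hk) as [_ H]. rewrite Sq0 in H. simpl in H.
    apply agree_trans with (fst (sq k)); auto. apply agree_sym; auto.
  - intros z Hz M HM.
    set (n := Z.to_nat M).
    destruct (proj2 (HTn n) z Hz) as [t [Ht Hzt]].
    destruct (Place n t Ht) as [s [Hs1 [Hs2 Hst]]].
    destruct (Inv (S n)) as [_ IR].
    destruct (Hxt (snd (sq (S n))) (S n)) as [k [Hk Ha]].
    destruct (Mono (S n) k Hk) as [_ Hm].
    exists s. split; [unfold n in Hs1; lia|].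
    intros j Hj. unfold shiftn.
    assert (Hn : Z.of_nat n = M) by (unfold n; lia).
    rewrite Hn in *.
    rewrite (Ha (j + s)) by lia. rewrite <- (Hm (j + s)) by lia.
    rewrite (Hzt j Hj). apply (Hst j Hj).
Qed.

Theorem mainTheorem4 (A B : Type) (HA : Finite A) (HB : Finite B)
  (X : (Z -> A) -> Prop) (Y : (Z -> B) -> Prop) (f : (Z -> A) -> (Z -> B)) :
  is_sofic X -> irreducible X ->
  is_SFT Y -> irreducible Y ->
  factor_map X Y f ->
  right_continuing_ae X Y f 0 ->
  forall x y, X x -> Y y -> (forall i, i <= 0 -> f x i = y i) ->
    exists x', X x' /\ (forall i, i <= 0 -> x' i = x i) /\ (forall i, f x' i = y i).
Proof.
  intros [[HCX HSX] _] HIX [[HCY HSY] [F HF]] _ [HfY [Hfc [Hfs Hfo]]] Hae x y Hx Hy Hxy.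
  assert (Pn : forall n : nat, exists xn, X xn /\ (forall i, - Z.of_nat n <= i <= 0 -> xn i = x i) /\
                 (forall i, - Z.of_nat n <= i <= Z.of_nat n -> f xn i = y i)).
  { intro n.
    set (Lf := Z.of_nat (list_max (map (@length B) F))).
    assert (HLf : forall w, In w F -> Z.of_nat (length w) <= Lf).
    { intros w Hw. unfold Lf.
      pose proof (proj1 (list_max_le (map (@length B) F) _) (le_n _)) as H.
      rewrite Forall_forall in H. specialize (H (length w) (in_map _ _ _ Hw)). lia. }
    set (N1 := Z.of_nat n + Lf).
    destruct (Hfc x Hx N1) as [M0 HM0].
    destruct (trans_point HA X HSX HCX HIX x (Z.max M0 (Z.of_nat n)) Hx ltac:(lia)) as [xt [Hxt [Hxxt Htr]]].
    assert (Hfx : agree_on (f x) (f xt) N1)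
      by (apply HM0; auto; apply agree_mono with (Z.max M0 (Z.of_nat n)); auto; lia).
    set (ys := fun i => if Z.leb i 0 then f xt i else y i).
    assert (Hys : forall i, -Lf <= i -> ys i = y i).
    { intros i Hi. unfold ys. destruct (Z.leb_spec i 0).
      - rewrite <- (Hfx i) by lia. apply Hxy; lia.
      - reflexivity. }
    assert (HYys : Y ys).
    { apply HF. intros w i Hw Hocc.
      pose proof (HLf w Hw) as Hlw.
      destruct (Z_lt_le_dec i (-Lf)).
      - apply (proj1 (HF (f xt)) (HfY xt Hxt) w i Hw). intros k Hk. rewrite (Hocc k Hk).
        unfold ys. destruct (Z.leb_spec (i + Z.of_nat k) 0); [reflexivity| lia].
      - apply (proj1 (HF y) Hy w i Hw). intros k Hk. rewrite (Hocc k Hk). f_equal. apply Hys. lia. }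
    assert (HLT : left_transitive Y ys).
    { split; auto. intros y' Hy' N.
      destruct (Z_lt_le_dec N 0).
      - exists 0. split; [lia|]. intros i Hi; lia.
      - destruct (Hfo y' Hy') as [z [Hz Hzy]].
        destruct (Hfc z Hz N) as [Mz HMz].
        destruct (Htr z Hz (Z.max Mz N) ltac:(lia)) as [s [Hs Has]].
        exists s. split; [lia|]. intros j Hj.
        assert (Hzs : agree_on (f z) (f (shiftn s xt)) N).
        { apply HMz. apply X_shiftn; auto. apply agree_sym. apply agree_mono with (Z.max Mz N); auto; lia. }
        unfold shiftn at 1. unfold ys. destruct (Z.leb_spec (j + s) 0); [|lia].
        rewrite <- Hzy. rewrite (Hzs j Hj). rewrite (f_shiftn X f HSX Hfs xt Hxt s j). reflexivity. }
    destruct (Hae xt ys Hxt HLT) as [x2 [Hx2 [H2l H2f]]].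
    { intros i Hi. unfold ys. destruct (Z.leb_spec i 0); auto. simpl in Hi; lia. }
    exists x2. split; auto. split.
    - intros i Hi. rewrite H2l by lia. symmetry. apply Hxxt; lia.
    - intros i Hi. rewrite H2f. unfold ys. destruct (Z.leb_spec i 0); auto.
      rewrite <- (Hfx i) by lia. apply Hxy; auto. }
  set (xs := fun n : nat => epsilon (inhabits x) (fun xn => X xn /\ (forall i, - Z.of_nat n <= i <= 0 -> xn i = x i) /\
                 (forall i, - Z.of_nat n <= i <= Z.of_nat n -> f xn i = y i))).
  assert (Hxs : forall n, X (xs n) /\ (forall i, - Z.of_nat n <= i <= 0 -> xs n i = x i) /\
                 (forall i, - Z.of_nat n <= i <= Z.of_nat n -> f (xs n) i = y i)).
  { intro n. unfold xs. apply epsilon_spec. apply Pn. }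
  clearbody xs.
  destruct (compact HA xs) as [x' Hx'].
  assert (HX' : X x').
  { apply HCX. intro N. destruct (Hx' N 0%nat) as [k [_ Hk]]. exists (xs k). split; [apply Hxs| auto]. }
  exists x'. split; auto. split.
  - intros i Hi. destruct (Hx' (-i) (Z.to_nat (-i))) as [k [Hk Ha]].
    rewrite (Ha i ltac:(lia)). apply Hxs. lia.
  - intros i. destruct (Hfc x' HX' (Z.abs i)) as [M HM].
    destruct (Hx' M (Z.to_nat (Z.abs i))) as [k [Hk Ha]].
    rewrite (HM (xs k) (proj1 (Hxs k)) Ha i ltac:(lia)). apply Hxs. lia.
Qed.
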